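(* Let $0<p<1$, let $\epsilon_1,\epsilon_2,\dots$ be i.i.d. $\mathrm{Bernoulli}(p)$ random variables, and let $Y_i=\begin{pmatrix}\epsilon_i&1\\1&0\end{pmatrix}$, $S_n=Y_nY_{n-1}\cdots Y_1$. Then the top Lyapunov exponent $\lambda(p)=\lim_{n\to\infty}\frac1n\mathbb{E}[\log\|S_n\|]$ satisfies \[ \frac{p\log 3}{4-p}\le \lambda(p)\le \frac{p\log 3}{2}. \]
   Context: $\mathrm{Bernoulli}(p)$ means $\mathbb{P}(\epsilon=1)=p$, $\mathbb{P}(\epsilon=0)=1-p$. $\|\cdot\|$ is any matrix norm (the limit is independent of the choice). It is known that $\lambda(p)=\mathbb{E}[\log X_p]$, where $X_p$ is a $(0,\infty)$-valued random variable with atomless law, uniquely determined by $X_p\sim\frac1{X_p}+\epsilon$ with $\epsilon\sim\mathrm{Bernoulli}(p)$ independent of $X_p$. *)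

(* Defs.v *)
From Stdlib Require Import Reals List.
Import ListNotations.
Open Scope R_scope.

(* 2x2 real matrices [[a b];[c d]] as quadruples (a, b, c, d). *)
Definition mat2 : Type := (R * R * R * R)%type.

Definition mat2_mul (M N : mat2) : mat2 :=
  match M, N with
  | (a, b, c, d), (a', b', c', d') =>
      (a * a' + b * c', a * b' + b * d', c * a' + d * c', c * b' + d * d')
  end.

Definition mat2_id : mat2 := (1, 0, 0, 1).

(* The matrix norm used: entrywise 1-norm (a submultiplicative matrix norm);
   the Lyapunov exponent does not depend on the choice of norm. *)
Definition mat2_norm (M : mat2) : R :=
  match M with (a, b, c, d) => Rabs a + Rabs b + Rabs c + Rabs d end.

Definition Ymat (e : bool) : mat2 := (if e then 1 else 0, 1, 1, 0).

(* For the outcome list [e_1; ...; e_n], S_n = Y_n Y_{n-1} ... Y_1. *)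
Definition Sprod (l : list bool) : mat2 :=
  fold_left (fun M e => mat2_mul (Ymat e) M) l mat2_id.

Fixpoint all_bits (n : nat) : list (list bool) :=
  match n with
  | O => (@nil bool) :: nil
  | S k => map (cons true) (all_bits k) ++ map (cons false) (all_bits k)
  end.

Definition bern_prob (p : R) (l : list bool) : R :=
  List.fold_right (fun (e : bool) (acc : R) => (if e then p else 1 - p) * acc) 1 l.

Definition bern_expect (p : R) (n : nat) (f : list bool -> R) : R :=
  List.fold_right (fun (l : list bool) (acc : R) => bern_prob p l * f l + acc) 0 (all_bits n).

Definition lyap_seq (p : R) (n : nat) : R :=
  bern_expect p n (fun l => ln (mat2_norm (Sprod l))) / INR n.

(* Main.v *)
Require Import Defs.
From Stdlib Require Import Reals Lra Psatz Arith List Classical ZArith.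
From Coquelicot Require Coquelicot.
Open Scope R_scope.

Definition vY (e : bool) (v : R * R) : R * R :=
  let (x, y) := v in if e then (x + y, x) else (y, x).
Definition vprod (l : list bool) (v : R * R) : R * R :=
  fold_left (fun v e => vY e v) l v.
Definition vs (v : R * R) : R := fst v + snd v.
Definition mv (M : mat2) (v : R * R) : R * R :=
  match M, v with (a, b, c, d), (x, y) => (a * x + b * y, c * x + d * y) end.
Definition nonneg (M : mat2) : Prop :=
  match M with (a, b, c, d) => 0 <= a /\ 0 <= b /\ 0 <= c /\ 0 <= d end.
Definition posv (v : R * R) : Prop := 0 <= fst v /\ 0 <= snd v /\ 0 < vs v.

Lemma mv_mul e M v : mv (mat2_mul (Ymat e) M) v = vY e (mv M v).
Proof.
  destruct M as [[[a b] c] d]; destruct v as [x y]; destruct e; simpl;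
  f_equal; ring.
Qed.

Lemma mv_fold l M v :
  mv (fold_left (fun M e => mat2_mul (Ymat e) M) l M) v = vprod l (mv M v).
Proof.
  revert M v; induction l as [|e l IH]; intros M v; simpl; [reflexivity|].
  rewrite IH. f_equal. apply mv_mul.
Qed.

Lemma mv_id v : mv mat2_id v = v.
Proof. destruct v; simpl; f_equal; ring. Qed.

Lemma Sprod_mv l v : mv (Sprod l) v = vprod l v.
Proof. unfold Sprod; rewrite mv_fold, mv_id; reflexivity. Qed.

Lemma nonneg_fold l M : nonneg M ->
  nonneg (fold_left (fun M e => mat2_mul (Ymat e) M) l M).
Proof.
  revert M; induction l as [|e l IH]; intros M HM; simpl; [exact HM|].
  apply IH. destruct M as [[[a b] c] d]; destruct e; simpl in *; lra.
Qed.

Lemma Sprod_nonneg l : nonneg (Sprod l).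
Proof. apply nonneg_fold; simpl; lra. Qed.

Lemma norm_eq l : mat2_norm (Sprod l) = vs (vprod l (1, 1)).
Proof.
  rewrite <- Sprod_mv. pose proof (Sprod_nonneg l) as H.
  destruct (Sprod l) as [[[a b] c] d]; simpl in *.
  rewrite !Rabs_pos_eq by lra. unfold vs; simpl. ring.
Qed.

Lemma posv_vY e v : posv v -> posv (vY e v).
Proof. destruct v as [x y]; unfold posv, vs; destruct e; simpl; lra. Qed.

Lemma posv_vprod l v : posv v -> posv (vprod l v).
Proof.
  revert v; induction l as [|e l IH]; intros v Hv; simpl; [exact Hv|].
  apply IH, posv_vY, Hv.
Qed.

Lemma vs_sub l w : posv w -> vs (vprod l w) <= vs w * vs (vprod l (1, 1)).
Proof.
  intros Hw. rewrite <- !Sprod_mv. pose proof (Sprod_nonneg l) as H.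
  destruct (Sprod l) as [[[a b] c] d]; destruct w as [x y]; unfold posv, vs in *; simpl in *.
  nra.
Qed.

Section E.
Variable p : R.
Definition wb (b : bool) := if b then p else 1 - p.

Lemma Ex_app L1 L2 f :
  fold_right (fun l acc => bern_prob p l * f l + acc) 0 (L1 ++ L2) =
  fold_right (fun l acc => bern_prob p l * f l + acc) 0 L1 +
  fold_right (fun l acc => bern_prob p l * f l + acc) 0 L2.
Proof. induction L1; simpl; [ring|]. rewrite IHL1; ring. Qed.

Lemma Ex_map b L f :
  fold_right (fun l acc => bern_prob p l * f l + acc) 0 (map (cons b) L) =
  wb b * fold_right (fun l acc => bern_prob p l * f (b :: l) + acc) 0 L.
Proof. induction L; simpl; [ring|]. rewrite IHL. unfold wb; destruct b; simpl; ring. Qed.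

Lemma bern_rec n f : bern_expect p (S n) f =
  p * bern_expect p n (fun l => f (true :: l)) + (1 - p) * bern_expect p n (fun l => f (false :: l)).
Proof. unfold bern_expect; simpl all_bits. rewrite Ex_app, !Ex_map. reflexivity. Qed.

Lemma bern_0 f : bern_expect p 0 f = f nil.
Proof. unfold bern_expect; simpl; ring. Qed.

Hypothesis hp : 0 <= p <= 1.

Lemma bern_mono n f g : (forall l, f l <= g l) -> bern_expect p n f <= bern_expect p n g.
Proof.
  revert f g; induction n; intros f g H.
  - rewrite !bern_0; apply H.
  - rewrite !bern_rec.
    pose proof (IHn _ _ (fun l => H (true :: l))).
    pose proof (IHn _ _ (fun l => H (false :: l))). nra.
Qed.

Lemma bern_ext n f g : (forall l, f l = g l) -> bern_expect p n f = bern_expect p n g.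
Proof. intros H; apply Rle_antisym; apply bern_mono; intros l; rewrite H; lra. Qed.

Lemma bern_plus_c n f c : bern_expect p n (fun l => c + f l) = c + bern_expect p n f.
Proof.
  revert f; induction n; intros f.
  - rewrite !bern_0; reflexivity.
  - rewrite !bern_rec, !IHn. ring.
Qed.

Lemma bern_split n m f : bern_expect p (n + m) f =
  bern_expect p n (fun l1 => bern_expect p m (fun l2 => f (l1 ++ l2))).
Proof.
  revert f; induction n; intros f.
  - rewrite bern_0. reflexivity.
  - simpl plus. rewrite !bern_rec, !IHn. reflexivity.
Qed.
End E.
Module CQ.
Import Coquelicot.Coquelicot.

Lemma ln_lb t : 0 <= t -> 2 * t / (2 + t) <= ln (1 + t).
Proof.
  intros Ht.
  destruct (Req_dec t 0) as [->|Ht0].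
  { replace (1+0) with 1 by ring. rewrite ln_1. unfold Rdiv. lra. }
  set (f := fun x => ln (1 + x) - 2 * x / (2 + x)).
  assert (Hd : forall x, 0 <= x -> is_derive f x (/(1+x) - 4 / (2+x)^2)).
  { intros x Hx. unfold f. auto_derive.
    - lra.
    - field. lra. }
  destruct (MVT_gen f 0 t (fun x => /(1+x) - 4 / (2+x)^2)) as [c [Hc Hfc]].
  - intros x Hx. apply Hd. rewrite Rmin_left in Hx by lra. lra.
  - intros x Hx. rewrite Rmin_left in Hx by lra.
    apply continuity_pt_filterlim. apply (ex_derive_continuous (K:=R_AbsRing) (V:=R_NormedModule)). eexists. apply Hd. lra.
  - rewrite Rmin_left in Hc by lra. rewrite Rmax_right in Hc by lra.
    assert (0 <= / (1 + c) - 4 / (2 + c) ^ 2).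
    { replace (/ (1 + c) - 4 / (2 + c) ^ 2) with (c*c / ((1+c)*(2+c)^2)) by (field; lra).
      apply Rmult_le_pos. nra. left. apply Rinv_0_lt_compat. nra. }
    unfold f in Hfc. replace (1+0) with 1 in Hfc by ring. rewrite ln_1 in Hfc.
    replace (2*0/(2+0)) with 0 in Hfc by (field). nra.
Qed.

Lemma ln3_ub : ln 3 <= 1.12.
Proof.
  assert (H1 : 1.035 <= exp 0.035) by (pose proof (exp_ineq1_le 0.035); lra).
  assert (E2 : exp 0.07 = exp 0.035 * exp 0.035) by (rewrite <- exp_plus; f_equal; lra).
  assert (E4 : exp 0.14 = exp 0.07 * exp 0.07) by (rewrite <- exp_plus; f_equal; lra).
  assert (E8 : exp 0.28 = exp 0.14 * exp 0.14) by (rewrite <- exp_plus; f_equal; lra).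
  assert (E16 : exp 0.56 = exp 0.28 * exp 0.28) by (rewrite <- exp_plus; f_equal; lra).
  assert (E32 : exp 1.12 = exp 0.56 * exp 0.56) by (rewrite <- exp_plus; f_equal; lra).
  assert (1.0712 <= exp 0.07) by nra.
  assert (1.1474 <= exp 0.14) by nra.
  assert (1.3165 <= exp 0.28) by nra.
  assert (1.7331 <= exp 0.56) by nra.
  assert (3 <= exp 1.12) by nra.
  rewrite <- (ln_exp 1.12). destruct (Req_dec 3 (exp 1.12)) as [->|]; [lra|].
  left. apply ln_increasing; lra.
Qed.
End CQ.
Import CQ.

Section Main.
Variable p : R.
Hypothesis hp0 : 0 < p.
Hypothesis hp1 : p < 1.
Let hp : 0 <= p <= 1. Proof. lra. Qed.

Lemma ln_le' x y : 0 < x -> x <= y -> ln x <= ln y.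
Proof. intros Hx [H|H]; [left; apply ln_increasing; lra| subst; lra]. Qed.

Definition G n v := bern_expect p n (fun l => ln (vs (vprod l v))).

Lemma G_rec n v : G (S n) v = p * G n (vY true v) + (1 - p) * G n (vY false v).
Proof. unfold G. rewrite bern_rec. reflexivity. Qed.

Definition cu := p * ln 3 / 2.
Definition Hup (v : R * R) := ln (2 * (fst v ^ 2 + snd v ^ 2)) / 2.

Lemma ln3_pos : 0 < ln 3.
Proof. rewrite <- ln_1. apply ln_increasing; lra. Qed.

Lemma Hup_base v : posv v -> ln (vs v) <= Hup v.
Proof.
  destruct v as [x y]; unfold posv, vs, Hup, vY; cbn [fst snd]; intros (Hx & Hy & Hxy).
  assert (ln ((x+y)^2) <= ln (2 * (x^2 + y^2))).
  { apply ln_le'. nra. pose proof (pow2_ge_0 (x-y)). nra. }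
  rewrite ln_pow in H by lra. replace (INR 2) with 2 in H by (simpl; ring). lra.
Qed.

Lemma Hup_Y1 v : posv v -> Hup (vY true v) <= Hup v + ln 3 / 2.
Proof.
  destruct v as [x y]; unfold posv, vs, Hup, vY; cbn [fst snd]; intros (Hx & Hy & Hxy).
  assert (ln (2 * ((x+y)^2 + x^2)) <= ln 3 + ln (2 * (x^2 + y^2))).
  { pose proof (pow2_ge_0 (x-y)). pose proof (pow2_ge_0 y). pose proof (pow2_ge_0 (x+y)). rewrite <- ln_mult by nra. apply ln_le'; nra. }

  lra.
Qed.

Lemma Hup_Y0 v : Hup (vY false v) = Hup v.
Proof. destruct v as [x y]; unfold Hup; simpl; f_equal; f_equal; f_equal; ring. Qed.

Lemma G_upper n v : posv v -> G n v <= INR n * cu + Hup v.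
Proof.
  revert v; induction n; intros v Hv.
  - unfold G; rewrite bern_0. simpl. pose proof (Hup_base v Hv). lra.
  - rewrite G_rec, S_INR.
    pose proof (IHn _ (posv_vY true v Hv)) as H1.
    pose proof (IHn _ (posv_vY false v Hv)) as H0.
    pose proof (Hup_Y1 v Hv). rewrite Hup_Y0 in H0.
    unfold cu in *.
    assert (p * G n (vY true v) <= p * (INR n * (p * ln 3 / 2) + (Hup v + ln 3 / 2))) by
      (apply Rmult_le_compat_l; lra).
    assert ((1-p) * G n (vY false v) <= (1-p) * (INR n * (p * ln 3 / 2) + Hup v)) by
      (apply Rmult_le_compat_l; lra).
    nra.
Qed.

Definition cl := p * ln 3 / (4 - p).
Definition kap := p * (7 + 2 * p) / 20.
Definition hlo (v : R * R) := ln (vs v) + kap * (fst v / vs v - 1).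

Lemma poly (t : R) : 0 <= t <= 1 ->
  1.12 * ((2+t)*(1+t)*20) <= (4-p) * (40*t*(1+t) + p*(7+2*p)*((2+t) - t*(1+t)*(2+t)) + (1-p)*(7+2*p)*(1-2*t)*(2+t)*(1+t)).
Proof. intros []. destruct hp.
assert (0 <= p*(1-p)) by nra. assert (0 <= t*(1-t)) by nra.
assert (0 <= p*t*(1-t)) by nra. assert (0 <= p*p*t*(1-t)) by nra.
assert (0 <= p*(1-p)*t) by nra. assert (0 <= p*(1-p)*t*t) by nra.
assert (0 <= (1-p)*t*(1-t)) by nra. assert (0<=p*t*t*(1-t)) by nra. assert (0<= t*t*(1-t)) by nra.
assert (0<=p*p*t*t*(1-t)) by nra. assert (0<=p*(1-p)*t*t*t) by nra.
assert (0<=p*p*(1-p)*t) by nra. assert (0<=p*p*(1-p)*t*t) by nra. assert (0<=p*p*(1-p)) by nra.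
nra. Qed.

Lemma drift_t t : 0 <= t <= 1 ->
  ln 3 / (4 - p) <= 2 * t / (2 + t) + (7 + 2 * p) / 20 * (p * (/(1+t) - t) + (1 - p) * (1 - 2 * t)).
Proof.
  intros Ht. pose proof (poly t Ht). pose proof ln3_ub.
  assert (ln 3 / (4 - p) <= 1.12 / (4 - p)).
  { unfold Rdiv; apply Rmult_le_compat_r; [left; apply Rinv_0_lt_compat; lra|lra]. }
  assert (1.12 / (4 - p) <= 2 * t / (2 + t) + (7 + 2 * p) / 20 * (p * (/(1+t) - t) + (1 - p) * (1 - 2 * t))); [|lra].
  apply Rmult_le_reg_r with ((2+t)*(1+t)*20*(4-p)). { apply Rmult_lt_0_compat; [|lra]. nra. }
  replace (1.12 / (4 - p) * ((2 + t) * (1 + t) * 20 * (4 - p))) with (1.12 * ((2+t)*(1+t)*20)) by (field; lra).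
  replace ((2 * t / (2 + t) + (7 + 2 * p) / 20 * (p * (/ (1 + t) - t) + (1 - p) * (1 - 2 * t))) *
    ((2 + t) * (1 + t) * 20 * (4 - p))) with
    ((4-p) * (40*t*(1+t) + p*(7+2*p)*((2+t) - t*(1+t)*(2+t)) + (1-p)*(7+2*p)*(1-2*t)*(2+t)*(1+t))) by (field; lra).
  lra.
Qed.

Lemma drift v : posv v -> hlo v + cl <= p * hlo (vY true v) + (1 - p) * hlo (vY false v).
Proof.
  destruct v as [x y]; unfold hlo, cl, kap, posv, vs, vY; cbn [fst snd]; intros (Hx & Hy & Hxy).
  assert (Ht : 0 <= x / (x + y) <= 1).
  { split. apply Rmult_le_pos; [lra|left; apply Rinv_0_lt_compat; lra].
    apply Rmult_le_reg_r with (x + y); [lra|]. unfold Rdiv; rewrite Rmult_assoc, Rinv_l by lra. lra. }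
  assert (E1 : x + y + x = (x + y) * (1 + x / (x + y))) by (field; lra).
  assert (E2 : (x + y) / (x + y + x) = / (1 + x / (x + y))) by (rewrite E1; field; split; lra).
  assert (E3 : y + x = x + y) by ring.
  assert (E4 : y / (x + y) = 1 - x / (x + y)) by (field; lra).
  rewrite E2, E3, E4, E1.
  rewrite ln_mult by lra.
  set (t := x / (x + y)) in *.
  pose proof (ln_lb t (proj1 Ht)). pose proof (drift_t t Ht).
  assert (p * (ln 3 / (4 - p)) <= p * (2 * t / (2 + t) + (7 + 2 * p) / 20 * (p * (/(1+t) - t) + (1 - p) * (1 - 2 * t)))) by
    (apply Rmult_le_compat_l; lra).
  assert (p * (2 * t / (2 + t)) <= p * ln (1 + t)) by (apply Rmult_le_compat_l; lra).
  replace (p * ln 3 / (4 - p)) with (p * (ln 3 / (4 - p))) by (unfold Rdiv; ring).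
  assert (0 < 1 + t) by lra.
  replace (p * (7 + 2 * p) / 20) with (p * ((7 + 2 * p) / 20)) by (unfold Rdiv; ring).
  set (A := (7 + 2 * p) / 20) in *. set (L := ln (1 + t)) in *. set (u := / (1 + t)) in *.
  set (Q := ln 3 / (4 - p)) in *. set (W := 2 * t / (2 + t)) in *.
  nra.
Qed.
End Main.

Lemma nat_arch r : exists n : nat, r < INR n.
Proof.
  destruct (archimed r) as [H _].
  exists (Z.to_nat (up r)).
  destruct (Z_lt_le_dec (up r) 0) as [Hz|Hz].
  - apply IZR_lt in Hz. pose proof (pos_INR (Z.to_nat (up r))). lra.
  - rewrite INR_IZR_INZ, Z2Nat.id by exact Hz. lra.
Qed.

Lemma sub_iter (a : nat -> R) (Hs : forall n m, a (n + m)%nat <= a n + a m) k q r :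
  a (q * k + r)%nat <= INR q * a k + a r.
Proof.
  induction q.
  - simpl. lra.
  - replace (S q * k + r)%nat with (k + (q * k + r))%nat by lia.
    rewrite S_INR. pose proof (Hs k (q * k + r)%nat). lra.
Qed.

Lemma fekete (a : nat -> R) (cl cu h1 : R) :
  (forall n m, a (n + m)%nat <= a n + a m) ->
  (forall n, 0 <= a n) ->
  (forall n, a n <= INR n * cu + h1) ->
  (forall n, (1 <= n)%nat -> cl <= a n / INR n) ->
  0 <= cu ->
  exists L, Un_cv (fun n => a n / INR n) L /\ cl <= L /\
    (forall n, (1 <= n)%nat -> L <= a n / INR n).
Proof.
  intros Hs Hpos Hup Hlo Hcu.
  set (E := fun x => exists n, (1 <= n)%nat /\ x = - (a n / INR n)).
  assert (Hb : bound E).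
  { exists (- cl). intros x [n [Hn ->]]. pose proof (Hlo n Hn). lra. }
  assert (Hne : exists x, E x) by (exists (- (a 1%nat / INR 1)); exists 1%nat; split; [lia|reflexivity]).
  destruct (completeness E Hb Hne) as [M [HM1 HM2]].
  assert (Hle : forall n, (1 <= n)%nat -> - M <= a n / INR n).
  { intros n Hn. assert (- (a n / INR n) <= M) by (apply HM1; exists n; auto). lra. }
  exists (- M). split; [|split].
  3: exact Hle.
  2: { assert (M <= - cl); [|lra]. apply HM2. intros x [n [Hn ->]]. pose proof (Hlo n Hn). lra. }
  intros eps Heps.
  assert (Hk : exists k, (1 <= k)%nat /\ a k / INR k < - M + eps / 2).
  { apply NNPP. intros Hn.
    assert (M <= M - eps / 2); [|lra].
    apply HM2. intros x [n [Hn1 ->]].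
    destruct (Rlt_or_le (a n / INR n) (- M + eps / 2)) as [H|H].
    - exfalso; apply Hn; exists n; auto.
    - lra. }
  destruct Hk as [k [Hk1 Hk2]].
  set (R0 := INR k * cu + h1).
  destruct (nat_arch (2 * R0 / eps)) as [N HN].
  exists (S N). intros n Hn. unfold R_dist.
  assert (Hn1 : (1 <= n)%nat) by lia.
  pose proof (Hle n Hn1).
  assert (Hkn : (k <> 0)%nat) by lia.
  pose proof (Nat.div_mod n k Hkn) as Hdm.
  pose proof (Nat.mod_upper_bound n k Hkn) as Hmu.
  set (q := (n / k)%nat) in *. set (r := (n mod k)%nat) in *.
  assert (Ha : a n <= INR q * a k + R0).
  { pose proof (sub_iter a Hs k q r) as H1.
    replace (q * k + r)%nat with n in H1 by lia.
    pose proof (Hup r). unfold R0.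
    assert (INR r <= INR k) by (apply le_INR; lia).
    assert (INR r * cu <= INR k * cu) by (apply Rmult_le_compat_r; lra).
    lra. }
  assert (Hkpos : 0 < INR k) by (apply lt_0_INR; lia).
  assert (Hnpos : 0 < INR n) by (apply lt_0_INR; lia).
  assert (Hqk : INR q * INR k <= INR n).
  { rewrite <- mult_INR. apply le_INR. lia. }
  assert (Hak : 0 <= a k / INR k) by (apply Rmult_le_pos; [apply Hpos| left; apply Rinv_0_lt_compat; lra]).
  assert (HqA : INR q * a k <= INR n * (a k / INR k)).
  { replace (INR q * a k) with (INR q * INR k * (a k / INR k)) by (field; lra).
    apply Rmult_le_compat_r; lra. }
  assert (HNn : INR N < INR n) by (apply lt_INR; lia).
  assert (HR0 : R0 < eps / 2 * INR n).
  { assert (2 * R0 / eps * eps < INR n * eps) by (apply Rmult_lt_compat_r; lra).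
    replace (2 * R0 / eps * eps) with (2 * R0) in H0 by (field; lra). lra. }
  assert (a n / INR n < - M + eps).
  { apply Rmult_lt_reg_r with (INR n); [lra|].
    replace (a n / INR n * INR n) with (a n) by (field; lra).
    nra. }
  rewrite Rabs_pos_eq; lra.
Qed.

Section Fin.
Variable p : R.
Hypothesis hp0 : 0 < p.
Hypothesis hp1 : p < 1.
Let hp : 0 <= p <= 1. Proof. lra. Qed.

Lemma kap_bounds : 0 <= kap p <= 9/20.
Proof. unfold kap. split; nra. Qed.

Lemma cl_pos : 0 <= cl p.
Proof. unfold cl. pose proof ln3_pos. apply Rmult_le_pos; [nra| left; apply Rinv_0_lt_compat; lra]. Qed.

Lemma G_lower n v : posv v -> INR n * cl p + hlo p v <= G p n v.
Proof.
  revert v; induction n; intros v Hv.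
  - unfold G; rewrite bern_0. simpl. unfold hlo.
    destruct v as [x y]; unfold posv, vs in *; cbn [fst snd] in *.
    pose proof kap_bounds.
    assert (x / (x + y) <= 1).
    { apply Rmult_le_reg_r with (x + y); [lra|]. unfold Rdiv; rewrite Rmult_assoc, Rinv_l by lra. lra. }
    assert (0 <= kap p * (1 - x / (x + y))) by (apply Rmult_le_pos; lra). lra.
  - rewrite G_rec, S_INR.
    pose proof (IHn _ (posv_vY true v Hv)) as H1.
    pose proof (IHn _ (posv_vY false v Hv)) as H0.
    pose proof (drift p hp0 hp1 v Hv).
    assert (p * (INR n * cl p + hlo p (vY true v)) <= p * G p n (vY true v)) by
      (apply Rmult_le_compat_l; lra).
    assert ((1-p) * (INR n * cl p + hlo p (vY false v)) <= (1-p) * G p n (vY false v)) by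
      (apply Rmult_le_compat_l; lra).
    nra.
Qed.

Definition aa n := bern_expect p n (fun l => ln (mat2_norm (Sprod l))).

Lemma aa_G n : aa n = G p n (1, 1).
Proof. unfold aa, G. apply bern_ext; [exact hp|]. intros l. rewrite norm_eq. reflexivity. Qed.

Lemma posv11 : posv (1, 1).
Proof. unfold posv, vs; simpl; lra. Qed.

Lemma aa_up n : aa n <= INR n * cu p + ln 2.
Proof.
  rewrite aa_G. pose proof (G_upper p hp0 hp1 n (1,1) posv11).
  unfold Hup in H; cbn [fst snd] in H.
  replace (2 * (1 ^ 2 + 1 ^ 2)) with (2 * 2) in H by ring.
  rewrite ln_mult in H by lra. lra.
Qed.

Lemma aa_lo n : INR n * cl p + (ln 2 - kap p / 2) <= aa n.
Proof.
  rewrite aa_G. pose proof (G_lower n (1,1) posv11).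
  unfold hlo, vs in H; cbn [fst snd] in H.
  replace (1 + 1) with 2 in H by ring.
  replace (1 / 2 - 1) with (- (1/2)) in H by field. lra.
Qed.

Lemma aa_pos n : 0 <= aa n.
Proof.
  pose proof (aa_lo n). pose proof ln_lt_2. pose proof kap_bounds. pose proof cl_pos.
  pose proof (pos_INR n). assert (0 <= INR n * cl p) by (apply Rmult_le_pos; lra). lra.
Qed.

Lemma ln_vs_sub l w : posv w ->
  ln (vs (vprod l w)) <= ln (vs w) + ln (vs (vprod l (1, 1))).
Proof.
  intros Hw. pose proof (posv_vprod l w Hw) as H1. pose proof (posv_vprod l (1,1) posv11) as H2.
  pose proof (vs_sub l w Hw).
  destruct Hw as (_ & _ & Hw'). destruct H1 as (_ & _ & H1). destruct H2 as (_ & _ & H2).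
  rewrite <- ln_mult by lra. apply ln_le'; lra.
Qed.

Lemma aa_sub n m : aa (n + m) <= aa n + aa m.
Proof.
  rewrite !aa_G. unfold G. rewrite bern_split.
  apply Rle_trans with (bern_expect p n (fun l1 => bern_expect p m (fun l2 => ln (vs (vprod l1 (1,1))) + ln (vs (vprod l2 (1, 1)))))).
  { apply bern_mono; [exact hp|]. intros l1. apply bern_mono; [exact hp|]. intros l2.
    unfold vprod at 1. rewrite fold_left_app. apply ln_vs_sub. apply posv_vprod, posv11. }
  apply Rle_trans with (bern_expect p n (fun l1 => bern_expect p m (fun l2 => ln (vs (vprod l2 (1, 1)))) + ln (vs (vprod l1 (1,1))))).
  { apply bern_mono; [exact hp|]. intros l1. rewrite bern_plus_c. lra. }
  rewrite bern_plus_c. lra.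
Qed.

End Fin.

Theorem theorem3p3 (p : R) (hp0 : 0 < p) (hp1 : p < 1) :
  exists lambda : R,
    Un_cv (lyap_seq p) lambda /\
    p * ln 3 / (4 - p) <= lambda /\ lambda <= p * ln 3 / 2.
Proof.
  assert (Hcu : 0 <= cu p) by (unfold cu; pose proof ln3_pos; nra).
  destruct (fekete (aa p) (cl p) (cu p) (ln 2) (aa_sub p hp0 hp1) (aa_pos p hp0 hp1) (aa_up p hp0 hp1)) as [L [HL1 [HL2 HL3]]].
  - intros n Hn. pose proof (aa_lo p hp0 hp1 n). pose proof ln_lt_2. pose proof (kap_bounds p hp0 hp1).
    assert (Hnp : 0 < INR n) by (apply lt_0_INR; lia).
    apply Rmult_le_reg_r with (INR n); [lra|].
    replace (aa p n / INR n * INR n) with (aa p n) by (field; lra). lra.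
  - exact Hcu.
  - exists L. split; [|split].
    + exact HL1.
    + exact HL2.
    + apply Rnot_lt_le. intros Hc. fold (cu p) in Hc.
      destruct (nat_arch (ln 2 / (L - cu p))) as [N HN].
      assert (Hd : 0 < L - cu p) by lra.
      pose proof (HL3 (S N) ltac:(lia)). pose proof (aa_up p hp0 hp1 (S N)).
      assert (HNp : 0 < INR (S N)) by (apply lt_0_INR; lia).
      assert (INR N < INR (S N)) by (apply lt_INR; lia).
      assert (ln 2 / (L - cu p) * (L - cu p) < INR (S N) * (L - cu p)) by (apply Rmult_lt_compat_r; lra).
      replace (ln 2 / (L - cu p) * (L - cu p)) with (ln 2) in H2 by (field; lra).
      assert (L * INR (S N) <= aa p (S N)).
      { replace (aa p (S N)) with (aa p (S N) / INR (S N) * INR (S N)) by (field; lra).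
        apply Rmult_le_compat_r; lra. }
      nra.
Qed.
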